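(* Let $K$ be a field, $\mathcal A$ a $K$-algebra, $\vartheta$ any one of the four types (left, right, pre-two-sided, two-sided), and $V$ a $K$-subspace of $\mathcal A$ such that every element of $\sqrt V$ is algebraic over $K$. Then $V$ is a $\vartheta$-Mathieu subspace of $\mathcal A$ if and only if $(e)_\vartheta\subseteq V$ for every idempotent $e\in V$.
   Context: All algebras are associative and unital. For a subset $S\subseteq\mathcal A$, $\sqrt S$ is the set of $a\in\mathcal A$ with $a^m\in S$ for all sufficiently large $m$. An idempotent is $e$ with $e^2=e$. Let $V$ be a $K$-subspace of $\mathcal A$. $V$ is a left (resp. right) Mathieu subspace if whenever $a\in\mathcal A$ satisfies $a^m\in V$ for all $m\ge1$, then for every $b\in\mathcal A$ there is $N$ with $ba^m\in V$ (resp. $a^mb\in V$) for all $m\ge N$; pre-two-sided if it is both left and right; two-sided if whenever $a^m\in V$ for all $m\ge1$, for all $b,c\in\mathcal A$ there is $N$ with $ba^mc\in V$ for all $m\ge N$. For $x\in\mathcal A$: $(x)_\vartheta$ is $\mathcal Ax$ if $\vartheta$ = left, $x\mathcal A$ if $\vartheta$ = right, the two-sided ideal generated by $x$ if $\vartheta$ = two-sided, and $x\mathcal A+\mathcal Ax$ if $\vartheta$ = pre-two-sided. *)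

(* Defs.v *)
From HB Require Import structures.
From mathcomp Require Import all_boot all_order all_algebra.
Set Implicit Arguments. Unset Strict Implicit. Unset Printing Implicit Defensive.
Import GRing.Theory.
Local Open Scope ring_scope.

Inductive mtype := MLeft | MRight | MPreTwoSided | MTwoSided.

Section Defs.
Variables (K : fieldType) (A : algType K).

Definition is_subspace (V : A -> Prop) : Prop :=
  V 0 /\ forall (k : K) (u v : A), V u -> V v -> V (k *: u + v).

Definition radical (V : A -> Prop) : A -> Prop :=
  fun a => exists N : nat, forall m : nat, (N <= m)%N -> V (a ^+ m).

Definition algebraic_over (a : A) : Prop :=
  exists p : {poly K}, p != 0 /\ horner_alg a p = 0.

Definition is_idempotent (e : A) : Prop := e * e = e.

Definition all_pows_in (V : A -> Prop) (a : A) : Prop :=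
  forall m : nat, (1 <= m)%N -> V (a ^+ m).

Definition left_mathieu (V : A -> Prop) : Prop :=
  forall a : A, all_pows_in V a -> forall b : A,
    exists N : nat, forall m : nat, (N <= m)%N -> V (b * a ^+ m).

Definition right_mathieu (V : A -> Prop) : Prop :=
  forall a : A, all_pows_in V a -> forall b : A,
    exists N : nat, forall m : nat, (N <= m)%N -> V (a ^+ m * b).

Definition two_sided_mathieu (V : A -> Prop) : Prop :=
  forall a : A, all_pows_in V a -> forall b c : A,
    exists N : nat, forall m : nat, (N <= m)%N -> V (b * a ^+ m * c).

Definition mathieu (t : mtype) (V : A -> Prop) : Prop :=
  match t with
  | MLeft => left_mathieu V
  | MRight => right_mathieu V
  | MPreTwoSided => left_mathieu V /\ right_mathieu V
  | MTwoSided => two_sided_mathieu V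
  end.

Definition gen_ideal (t : mtype) (x : A) : A -> Prop :=
  match t with
  | MLeft => fun y => exists b : A, y = b * x
  | MRight => fun y => exists b : A, y = x * b
  | MPreTwoSided => fun y => exists b c : A, y = x * b + c * x
  | MTwoSided => fun y => exists (n : nat) (b c : 'I_n -> A),
                   y = \sum_(i < n) b i * x * c i
  end.

End Defs.

(* Main.v *)
Require Import Defs.
From mathcomp Require Import all_boot all_order all_algebra ring.
Import GRing.Theory.
Local Open Scope ring_scope.

Lemma idem_aux1 (R : comPzRingType) (q u1 u2 X Y : R) :
  u1 * q + u2 * (Y * X) = 1 ->
  (u2 * (Y * X)) * (u2 * (Y*X)) = u2 * (Y*X) - (u2*u1*X) * (q * Y).
Proof. move=> hb. apply/eqP; rewrite -subr_eq0.
have -> : u2 * (Y * X) * (u2 * (Y*X)) - (u2 * (Y*X) - u2 * u1 * X * (q * Y))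
  = (u2 * (Y*X)) * (u1 * q + u2 * (Y*X) - 1) by ring.
by rewrite hb subrr mulr0. Qed.

Lemma idem_aux2 (R : comPzRingType) (q u1 u2 X Y : R) :
  u1 * q + u2 * (Y * X) = 1 ->
  Y * X = (Y * X) * (u2 * (Y*X)) + (u1*X) * (q * Y).
Proof. move=> hb. apply/eqP; rewrite -subr_eq0.
have -> : Y * X - ((Y * X) * (u2 * (Y*X)) + (u1*X) * (q * Y))
  = (Y * X) * (1 - (u1 * q + u2 * (Y*X))) by ring.
by rewrite hb subrr mulr0. Qed.

Arguments idem_aux1 {R q u1 u2 X Y}.
Arguments idem_aux2 {R q u1 u2 X Y}.

Lemma fitting (K : fieldType) (A : algType K) (a : A) :
  algebraic_over a -> exists (w : {poly K}) (r : nat),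
  let e := horner_alg a (w * 'X) in
  e * e = e /\ a ^+ r * e = a ^+ r /\ e * a ^+ r = a ^+ r.
Proof.
case=> p [p0 hpa].
case: (multiplicity_XsubC p 0) => r [q]; rewrite p0 /= => hq0 hp.
rewrite polyC0 subr0 in hp.
have cop : coprimep q ('X ^+ r.+1) by rewrite coprimep_pexpr // coprimepX.
case/Bezout_eq1_coprimepP: cop => [[u1 u2]] /= hb.
rewrite exprSr in hb.
have hp0 : (horner_alg a) (q * 'X ^+ r) = 0 by rewrite -hp.
have comm : forall P Q, (horner_alg a) P * (horner_alg a) Q = (horner_alg a) Q * (horner_alg a) P.
  by move=> P Q; rewrite -!rmorphM mulrC.
have har : a ^+ r.+1 = (horner_alg a) ('X ^+ r * 'X).
  by rewrite -exprSr rmorphXn /= horner_algX.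
exists (u2 * 'X ^+ r), r.+1 => /=.
rewrite -mulrA.
have hE : (horner_alg a) (u2 * ('X ^+ r * 'X)) * (horner_alg a) (u2 * ('X ^+ r * 'X)) = (horner_alg a) (u2 * ('X ^+ r * 'X)).
  by rewrite -rmorphM (idem_aux1 hb) rmorphB /= [(horner_alg a) (_ * (q * _))]rmorphM /= hp0 mulr0 subr0.
have hA : a ^+ r.+1 * (horner_alg a) (u2 * ('X ^+ r * 'X)) = a ^+ r.+1.
  rewrite har -rmorphM /=.
  transitivity ((horner_alg a) ('X ^+ r * 'X * (u2 * ('X ^+ r * 'X)) + u1 * 'X * (q * 'X ^+ r))).
    by rewrite rmorphD /= [(horner_alg a) (_ * (q * _))]rmorphM /= hp0 mulr0 addr0.
  by rewrite -(idem_aux2 hb).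
split=> //; split=> //.
by rewrite har comm -har.
Qed.

Lemma V_lin (K : fieldType) (A : algType K) (V : A -> Prop) (a : A) :
  is_subspace V -> all_pows_in V a ->
  forall w : {poly K}, forall k, (1 <= k)%N -> V (horner_alg a (w * 'X ^+ k)).
Proof.
move=> [V0 Vlin] hpow w; elim/poly_ind: w => [|w c IH] k hk.
  by rewrite mul0r rmorph0.
rewrite mulrDl rmorphD -mulrA -exprS /= mul_polyC linearZ /= rmorphXn /= horner_algX addrC.
by rewrite mulr_algl; apply: Vlin; [exact: hpow | exact: IH].
Qed.

Lemma idem_pow (A : pzRingType) (e : A) : e * e = e -> forall m, e ^+ m.+1 = e.
Proof. by move=> he; elim=> [|m IH] //; rewrite exprS IH he. Qed.

Theorem theorem4p2 (K : fieldType) (A : algType K) (t : mtype) (V : A -> Prop)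
  (hV : is_subspace V)
  (halg : forall a : A, radical V a -> algebraic_over a) :
  mathieu t V <->
  (forall e : A, is_idempotent e -> V e -> forall y : A, gen_ideal t e y -> V y).
Proof.
have Vadd : forall u v, V u -> V v -> V (u + v).
  by move=> u v hu hv; have := proj2 hV 1 u v hu hv; rewrite scale1r.
split.
- move=> hM e he Ve y.
  have hp : all_pows_in V e by case=> [|m] // _; rewrite idem_pow.
  have L : left_mathieu V -> forall b, V (b * e).
    move=> hL b; case: (hL e hp b) => N HN.
    by have := HN N.+1 (leqnSn N); rewrite idem_pow.
  have R : right_mathieu V -> forall b, V (e * b).
    move=> hR b; case: (hR e hp b) => N HN.
    by have := HN N.+1 (leqnSn N); rewrite idem_pow.
  case: t hM => /= hM.
  + by case=> b ->; apply: L.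
  + by case=> b ->; apply: R.
  + by case=> b [c ->]; apply: Vadd; [apply: R; case: hM | apply: L; case: hM].
  + case=> n [b [c ->]]; apply: (big_ind V) => //; first exact: proj1 hV.
    move=> i _; case: (hM e hp (b i) (c i)) => N HN.
    by have := HN N.+1 (leqnSn N); rewrite idem_pow.
- move=> hI.
  have key : forall a, all_pows_in V a -> exists e r, is_idempotent e /\ V e /\
      forall m, (r <= m)%N -> a ^+ m * e = a ^+ m /\ e * a ^+ m = a ^+ m.
    move=> a hp.
    have [w [r /= [he [h1 h2]]]] := @fitting _ _ a (halg a (ex_intro _ 1%N hp)).
    exists (horner_alg a (w * 'X)), r; split=> //; split.
      by have := @V_lin _ _ V a hV hp w 1%N (leqnn 1); rewrite expr1.
    move=> m hm; rewrite -(subnK hm) exprD; split; first by rewrite -mulrA h1.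
    by rewrite -exprD addnC exprD mulrA h2.
  case: t hI => /= hI.
  + move=> a hp b; have [e [r [he [Ve H]]]] := key a hp; exists r => m hm.
    have [h1 _] := H m hm; apply: (hI e he Ve); exists (b * a ^+ m).
    by rewrite -mulrA h1.
  + move=> a hp b; have [e [r [he [Ve H]]]] := key a hp; exists r => m hm.
    have [_ h2] := H m hm; apply: (hI e he Ve); exists (a ^+ m * b).
    by rewrite mulrA h2.
  + split.
    * move=> a hp b; have [e [r [he [Ve H]]]] := key a hp; exists r => m hm.
      have [h1 _] := H m hm; apply: (hI e he Ve); exists 0, (b * a ^+ m).
      by rewrite mulr0 add0r -mulrA h1.
    * move=> a hp b; have [e [r [he [Ve H]]]] := key a hp; exists r => m hm.
      have [_ h2] := H m hm; apply: (hI e he Ve); exists (a ^+ m * b), 0.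
      by rewrite mul0r addr0 mulrA h2.
  + move=> a hp b c; have [e [r [he [Ve H]]]] := key a hp; exists r => m hm.
    have [_ h2] := H m hm; apply: (hI e he Ve).
    exists 1%N, (fun=> b), (fun=> a ^+ m * c).
    by rewrite big_ord1 -(mulrA b e) (mulrA e) h2 mulrA.
Qed.
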